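(* Let $B$ be the open unit disk, let $U=(u,v)\in C^1(\overline B;\mathbb R^2)$ be harmonic in $B$, $\Phi=U|_{\partial B}$, $\tilde u$ a harmonic conjugate of $u$ and $f=u+i\tilde u$. Assume $\det DU>0$ on $\partial B$ and that $\frac{\partial u}{\partial\theta}\big|_{\partial B}$ vanishes at only finitely many points. Then $\mathrm{WN}(f(\partial B))=\mathrm{WN}(\Phi(\partial B))$.
   Context: For a closed curve parameterized by a $C^1$ map $\theta\mapsto F(e^{i\theta})$ with $\partial F/\partial\theta\neq0$ for all $\theta$, its winding number is $\mathrm{WN}=\frac1{2\pi}\int_{\partial B}\mathrm d\,\arg\left(\frac{\partial F}{\partial\theta}\right)$. *)

(* Defs.v *)
From Stdlib Require Import Reals Lra ClassicalEpsilon List.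
From Coquelicot Require Import Coquelicot.
Open Scope R_scope.

Definition in_B (x y : R) : Prop := x ^ 2 + y ^ 2 < 1.
Definition in_cB (x y : R) : Prop := x ^ 2 + y ^ 2 <= 1.
Definition on_dB (x y : R) : Prop := x ^ 2 + y ^ 2 = 1.

Definition continuous_on_cB (g : R -> R -> R) : Prop :=
  forall x y, in_cB x y ->
  forall eps : R, 0 < eps -> exists delta : R, 0 < delta /\
    forall x' y', in_cB x' y' -> Rabs (x' - x) < delta -> Rabs (y' - y) < delta ->
      Rabs (g x' y' - g x y) < eps.

(* On ∂B, Du means (ux, uy). *)
Definition C1_cB (u ux uy : R -> R -> R) : Prop :=
  continuous_on_cB u /\ continuous_on_cB ux /\ continuous_on_cB uy /\
  forall x y, in_B x y -> differentiable_pt_lim u x y (ux x y) (uy x y).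

Definition harmonic_in_B (u : R -> R -> R) : Prop :=
  exists ux uy uxx uxy uyx uyy : R -> R -> R,
  forall x y, in_B x y ->
    differentiable_pt_lim u x y (ux x y) (uy x y) /\
    differentiable_pt_lim ux x y (uxx x y) (uxy x y) /\
    differentiable_pt_lim uy x y (uyx x y) (uyy x y) /\
    continuity_2d_pt uxx x y /\ continuity_2d_pt uxy x y /\
    continuity_2d_pt uyx x y /\ continuity_2d_pt uyy x y /\
    uxx x y + uyy x y = 0.

Definition bdry (F : R -> R -> R) (t : R) : R := F (cos t) (sin t).

Definition arg_lift (a b : R -> R) (phi : R -> R) : Prop :=
  (forall t, continuous phi t) /\
  forall t, a t = sqrt (a t ^ 2 + b t ^ 2) * cos (phi t) /\
            b t = sqrt (a t ^ 2 + b t ^ 2) * sin (phi t).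

(* Winding number of the closed C^1 curve theta |-> (F1, F2)(e^{i theta}):
   WN = (1/2pi) ∫_{∂B} d arg (∂F/∂theta), i.e. the total increment over [0, 2pi]
   of a continuous argument of the tangent ∂F/∂theta, divided by 2pi. *)
Definition WN (F1 F2 : R -> R -> R) : R :=
  epsilon (inhabits 0) (fun w => exists phi,
    arg_lift (Derive (bdry F1)) (Derive (bdry F2)) phi /\
    w = (phi (2 * PI) - phi 0) / (2 * PI)).

(* Main.v *)
Require Import Defs.
From Stdlib Require Import Reals Lra List.
From Coquelicot Require Import Coquelicot.
Open Scope R_scope.

Lemma circ t : cos t ^ 2 + sin t ^ 2 = 1.
Proof. pose proof (sin2_cos2 t). unfold Rsqr in H. nra. Qed.

Lemma cB_comp g : continuous_on_cB g -> forall t,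
  continuity_pt (fun t => g (cos t) (sin t)) t.
Proof.
  intros Hg t. unfold continuity_pt, continue_in, limit1_in, limit_in.
  intros eps He. simpl. unfold R_dist.
  assert (Hc : in_cB (cos t) (sin t)) by (unfold in_cB; rewrite circ; lra).
  destruct (Hg _ _ Hc eps He) as [d [Hd H]].
  pose proof (continuity_cos t) as Cc. pose proof (continuity_sin t) as Cs.
  unfold continuity_pt, continue_in, limit1_in, limit_in in Cc, Cs.
  destruct (Cc d Hd) as [a1 [Ha1 H1]]. destruct (Cs d Hd) as [a2 [Ha2 H2]].
  exists (Rmin a1 a2). split. apply Rmin_pos; lra.
  intros x [[_ Hne] Hx]. simpl in *. unfold R_dist in *.
  apply H. unfold in_cB; rewrite circ; lra.
  apply H1. split. split; [exact I | exact Hne]. simpl; unfold R_dist. pose proof (Rmin_l a1 a2); lra.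
  apply H2. split. split; [exact I | exact Hne]. simpl; unfold R_dist. pose proof (Rmin_r a1 a2); lra.
Qed.

Lemma lim_deriv (Fn Dn : nat -> R -> R) (F : R -> R) t L :
  (forall n x, is_derive (Fn n) x (Dn n x)) ->
  (forall x, is_lim_seq (fun n => Fn n x) (F x)) ->
  (forall eps, 0 < eps -> exists eta, 0 < eta /\ exists N, forall n x,
      (N <= n)%nat -> Rabs (x - t) < eta -> Rabs (Dn n x - L) < eps) ->
  is_derive F t L.
Proof.
  intros HD Hl Hu. apply is_derive_Reals. intros eps He.
  destruct (Hu (eps/2)) as [eta [Heta [N HN]]]. lra.
  exists (mkposreal eta Heta). intros h Hh0 Hh. simpl in Hh.
  assert (Hb : forall n, (N <= n)%nat ->
     Rabs (Fn n (t + h) - Fn n t - L * h) <= eps/2 * Rabs h).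
  { intros n Hn.
    destruct (MVT_gen (Fn n) t (t+h) (Dn n)) as [c [Hc Heq]].
    - intros x _; apply HD.
    - intros x _. apply derivable_continuous_pt. exists (Dn n x).
      apply is_derive_Reals, HD.
    - rewrite Heq. replace (Dn n c * (t + h - t) - L * h) with ((Dn n c - L) * h) by ring.
      rewrite Rabs_mult. apply Rmult_le_compat_r. apply Rabs_pos.
      left. apply HN. auto.
      revert Hc. unfold Rmin, Rmax. destruct (Rle_dec t (t+h)); intros [Hc1 Hc2];
      apply Rabs_def1; apply Rabs_def2 in Hh; lra. }
  assert (Hlim : is_lim_seq (fun n => Rabs (Fn n (t + h) - Fn n t - L * h))
                   (Rabs (F (t+h) - F t - L * h))).
  { apply (is_lim_seq_abs _ (Finite _)).
    apply is_lim_seq_minus'. apply is_lim_seq_minus'. apply Hl. apply Hl. apply is_lim_seq_const. }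
  assert (Hle : Rabs (F (t+h) - F t - L * h) <= eps/2 * Rabs h).
  { pose proof (is_lim_seq_le_loc _ _ _ _ (ex_intro _ N Hb) Hlim (is_lim_seq_const _)) as K.
    simpl in K. exact K. }
  assert (Hpos : 0 < Rabs h) by (apply Rabs_pos_lt; auto).
  replace ((F (t + h) - F t) / h - L) with ((F (t+h) - F t - L * h) / h) by (field; auto).
  rewrite Rabs_div; auto.
  apply (Rmult_lt_reg_r (Rabs h)); auto. unfold Rdiv. rewrite Rmult_assoc, Rinv_l by lra. nra.
Qed.

Lemma cont_ed f t : continuity_pt f t -> forall e, 0 < e -> exists a, 0 < a /\
  forall x, Rabs (x - t) < a -> Rabs (f x - f t) < e.
Proof.
  intros H e He. unfold continuity_pt, continue_in, limit1_in, limit_in in H.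
  destruct (H e He) as [a [Ha Hx]]. exists a; split; auto.
  intros x Hxt. destruct (Req_dec x t) as [->|Hne].
  - rewrite Rminus_diag, Rabs_R0; auto.
  - apply (Hx x). split. split; [exact I | auto]. simpl; unfold R_dist; auto.
Qed.

Lemma prod_est X X' y y' e : Rabs (X' - X) < e -> Rabs (y' - y) < 2 * e ->
  Rabs y <= 1 -> e <= 1 -> Rabs (X' * y' - X * y) <= e * (2 * Rabs X + 3).
Proof.
  intros H1 H2 H3 H4.
  replace (X' * y' - X * y) with ((X' - X) * y' + X * (y' - y)) by ring.
  eapply Rle_trans. apply Rabs_triang. rewrite !Rabs_mult.
  assert (Rabs y' <= 3).
  { replace y' with ((y' - y) + y) by ring. eapply Rle_trans. apply Rabs_triang. lra. }
  pose proof (Rabs_pos (X'-X)). pose proof (Rabs_pos X). pose proof (Rabs_pos (y'-y)).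
  nra.
Qed.

Definition rn (n : nat) : R := 1 - / (INR n + 2).

Lemma rn_bounds n : 0 < rn n < 1.
Proof.
  unfold rn. pose proof (pos_INR n).
  assert (0 < / (INR n + 2)) by (apply Rinv_0_lt_compat; lra).
  assert (/ (INR n + 2) <= / 2) by (apply Rinv_le_contravar; lra). lra.
Qed.

Lemma rn_close e : 0 < e -> exists N, forall n, (N <= n)%nat -> Rabs (1 - rn n) < e.
Proof.
  intros He. destruct (archimed_cor1 e He) as [N [HN HN0]]. exists N.
  intros n Hn. unfold rn. replace (1 - (1 - / (INR n + 2))) with (/ (INR n + 2)) by ring.
  assert (INR N <= INR n) by (apply le_INR; auto).
  assert (0 < INR N) by (apply lt_0_INR; auto).
  rewrite Rabs_pos_eq. eapply Rle_lt_trans; [|exact HN].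
  apply Rinv_le_contravar; lra. left; apply Rinv_0_lt_compat; lra.
Qed.

Lemma bdry_deriv F Fx Fy : C1_cB F Fx Fy -> forall t,
  is_derive (bdry F) t (- sin t * Fx (cos t) (sin t) + cos t * Fy (cos t) (sin t)).
Proof.
  intros [HF [HFx [HFy HD]]] t.
  apply (lim_deriv (fun n x => F (rn n * cos x) (rn n * sin x))
     (fun n x => Fx (rn n * cos x) (rn n * sin x) * (rn n * - sin x)
               + Fy (rn n * cos x) (rn n * sin x) * (rn n * cos x))).
  - intros n x. apply is_derive_Reals. pose proof (rn_bounds n).
    apply derivable_pt_lim_comp_2d.
    + apply HD. unfold in_B. pose proof (circ x). nra.
    + apply is_derive_Reals. auto_derive; auto; ring.
    + apply is_derive_Reals. auto_derive; auto; ring.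
  - intros x. apply is_lim_seq_Reals. intros e He. unfold bdry.
    assert (Hc : in_cB (cos x) (sin x)) by (unfold in_cB; rewrite circ; lra).
    destruct (HF _ _ Hc e He) as [d [Hd H]].
    destruct (rn_close d Hd) as [N HN]. exists N. intros n Hn. unfold R_dist.
    pose proof (HN n Hn). pose proof (rn_bounds n).
    pose proof (COS_bound x). pose proof (SIN_bound x).
    apply H.
    + unfold in_cB. pose proof (circ x). nra.
    + replace (rn n * cos x - cos x) with (- (1 - rn n) * cos x) by ring.
      rewrite Rabs_mult, Rabs_Ropp. apply Rle_lt_trans with (Rabs (1 - rn n) * 1); [|lra].
      apply Rmult_le_compat_l. apply Rabs_pos. apply Rabs_le; lra.
    + replace (rn n * sin x - sin x) with (- (1 - rn n) * sin x) by ring.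
      rewrite Rabs_mult, Rabs_Ropp. apply Rle_lt_trans with (Rabs (1 - rn n) * 1); [|lra].
      apply Rmult_le_compat_l. apply Rabs_pos. apply Rabs_le; lra.
  - intros eps Heps.
    set (X := Fx (cos t) (sin t)). set (Y := Fy (cos t) (sin t)).
    set (e1 := Rmin 1 (eps / (2 * Rabs X + 2 * Rabs Y + 7))).
    assert (HK : 0 < 2 * Rabs X + 2 * Rabs Y + 7) by (pose proof (Rabs_pos X); pose proof (Rabs_pos Y); lra).
    assert (He1 : 0 < e1) by (apply Rmin_pos; [lra | apply Rdiv_lt_0_compat; lra]).
    assert (He1' : e1 <= 1) by apply Rmin_l.
    assert (He1e : e1 * (2 * Rabs X + 2 * Rabs Y + 7) <= eps).
    { unfold e1. apply Rle_trans with ((eps / (2 * Rabs X + 2 * Rabs Y + 7)) * (2 * Rabs X + 2 * Rabs Y + 7)).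
      apply Rmult_le_compat_r; [lra | apply Rmin_r]. right; field; lra. }
    assert (Hc : in_cB (cos t) (sin t)) by (unfold in_cB; rewrite circ; lra).
    destruct (HFx _ _ Hc e1 He1) as [d1 [Hd1 H1]].
    destruct (HFy _ _ Hc e1 He1) as [d2 [Hd2 H2]].
    set (d := Rmin d1 d2).
    assert (Hd : 0 < d) by (apply Rmin_pos; auto).
    set (e2 := Rmin e1 (d / 2)).
    assert (He2 : 0 < e2) by (apply Rmin_pos; lra).
    assert (He2a : e2 <= e1) by apply Rmin_l.
    assert (He2b : e2 <= d / 2) by apply Rmin_r.
    assert (Hda : d <= d1) by apply Rmin_l. assert (Hdb : d <= d2) by apply Rmin_r.
    destruct (cont_ed cos t (continuity_cos t) e2 He2) as [a1 [Ha1 A1]].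
    destruct (cont_ed sin t (continuity_sin t) e2 He2) as [a2 [Ha2 A2]].
    exists (Rmin a1 a2). split. apply Rmin_pos; auto.
    destruct (rn_close e2 He2) as [N HN]. exists N. intros n x Hn Hx.
    pose proof (HN n Hn) as Hr. pose proof (rn_bounds n) as Hrb.
    assert (Hcx : Rabs (cos x - cos t) < e2) by (apply A1; pose proof (Rmin_l a1 a2); lra).
    assert (Hsx : Rabs (sin x - sin t) < e2) by (apply A2; pose proof (Rmin_r a1 a2); lra).
    pose proof (COS_bound x). pose proof (SIN_bound x).
    assert (Hcc : Rabs (rn n * cos x - cos x) <= Rabs (1 - rn n)).
    { replace (rn n * cos x - cos x) with (- (1 - rn n) * cos x) by ring.
      rewrite Rabs_mult, Rabs_Ropp. rewrite <- (Rmult_1_r (Rabs (1 - rn n))) at 2.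
      apply Rmult_le_compat_l. apply Rabs_pos. apply Rabs_le; lra. }
    assert (Hss : Rabs (rn n * sin x - sin x) <= Rabs (1 - rn n)).
    { replace (rn n * sin x - sin x) with (- (1 - rn n) * sin x) by ring.
      rewrite Rabs_mult, Rabs_Ropp. rewrite <- (Rmult_1_r (Rabs (1 - rn n))) at 2.
      apply Rmult_le_compat_l. apply Rabs_pos. apply Rabs_le; lra. }
    assert (Q1 : Rabs (rn n * cos x - cos t) < d).
    { replace (rn n * cos x - cos t) with ((rn n * cos x - cos x) + (cos x - cos t)) by ring.
      eapply Rle_lt_trans. apply Rabs_triang. lra. }
    assert (Q2 : Rabs (rn n * sin x - sin t) < d).
    { replace (rn n * sin x - sin t) with ((rn n * sin x - sin x) + (sin x - sin t)) by ring.
      eapply Rle_lt_trans. apply Rabs_triang. lra. }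
    assert (Hin : in_cB (rn n * cos x) (rn n * sin x)) by (unfold in_cB; pose proof (circ x); nra).
    assert (E1 : Rabs (Fx (rn n * cos x) (rn n * sin x) - X) < e1) by (apply H1; auto; lra).
    assert (E2 : Rabs (Fy (rn n * cos x) (rn n * sin x) - Y) < e1) by (apply H2; auto; lra).
    assert (Y1 : Rabs (rn n * - sin x - - sin t) < 2 * e1).
    { replace (rn n * - sin x - - sin t) with (- ((rn n * sin x - sin x) + (sin x - sin t))) by ring.
      rewrite Rabs_Ropp. eapply Rle_lt_trans. apply Rabs_triang. lra. }
    assert (Y2 : Rabs (rn n * cos x - cos t) < 2 * e1).
    { replace (rn n * cos x - cos t) with ((rn n * cos x - cos x) + (cos x - cos t)) by ring.
      eapply Rle_lt_trans. apply Rabs_triang. lra. }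
    assert (B1 : Rabs (- sin t) <= 1) by (rewrite Rabs_Ropp; apply Rabs_le; apply SIN_bound).
    assert (B2 : Rabs (cos t) <= 1) by (apply Rabs_le; apply COS_bound).
    pose proof (prod_est _ _ _ _ _ E1 Y1 B1 He1') as P1.
    pose proof (prod_est _ _ _ _ _ E2 Y2 B2 He1') as P2.
    fold X Y.
    replace (Fx (rn n * cos x) (rn n * sin x) * (rn n * - sin x) +
      Fy (rn n * cos x) (rn n * sin x) * (rn n * cos x) - (- sin t * X + cos t * Y))
      with ((Fx (rn n * cos x) (rn n * sin x) * (rn n * - sin x) - X * - sin t) +
            (Fy (rn n * cos x) (rn n * sin x) * (rn n * cos x) - Y * cos t)) by ring.
    eapply Rle_lt_trans. apply Rabs_triang. nra.
Qed.

Definition dlt (p1 p2 q1 q2 : R) : R :=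
  2 * atan ((p1 * q2 - p2 * q1) /
     (sqrt (p1 ^ 2 + p2 ^ 2) * sqrt (q1 ^ 2 + q2 ^ 2) + (p1 * q1 + p2 * q2))).

Definition good (p1 p2 q1 q2 : R) : Prop :=
  0 < sqrt (p1 ^ 2 + p2 ^ 2) * sqrt (q1 ^ 2 + q2 ^ 2) + (p1 * q1 + p2 * q2).

Lemma sqrt_sq_pos a b : 0 < sqrt (a^2+b^2) -> 0 < a^2 + b^2.
Proof.
  intros H. destruct (Rle_lt_dec (a^2+b^2) 0); auto.
  assert (a^2+b^2 = 0) by nra. rewrite H0, sqrt_0 in H. lra.
Qed.

Lemma cos_sin_dlt p1 p2 q1 q2 : good p1 p2 q1 q2 ->
  let N := sqrt (p1 ^ 2 + p2 ^ 2) * sqrt (q1 ^ 2 + q2 ^ 2) in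
  0 < sqrt (p1 ^ 2 + p2 ^ 2) /\ 0 < sqrt (q1 ^ 2 + q2 ^ 2) /\
  cos (dlt p1 p2 q1 q2) * N = p1 * q1 + p2 * q2 /\
  sin (dlt p1 p2 q1 q2) * N = p1 * q2 - p2 * q1.
Proof.
  intros Hg N. unfold good in Hg. fold N in Hg.
  set (P := p1^2+p2^2) in *. set (Q := q1^2+q2^2) in *.
  assert (HP : 0 <= P) by (unfold P; nra). assert (HQ : 0 <= Q) by (unfold Q; nra).
  assert (sP : sqrt P * sqrt P = P) by (apply sqrt_sqrt; auto).
  assert (sQ : sqrt Q * sqrt Q = Q) by (apply sqrt_sqrt; auto).
  pose proof (sqrt_pos P). pose proof (sqrt_pos Q).
  set (c := p1 * q2 - p2 * q1) in *. set (d := p1 * q1 + p2 * q2) in *.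
  assert (Lag : N * N = c * c + d * d).
  { unfold N. replace (sqrt P * sqrt Q * (sqrt P * sqrt Q)) with ((sqrt P * sqrt P) * (sqrt Q * sqrt Q)) by ring.
    rewrite sP, sQ. unfold P, Q, c, d. ring. }
  assert (HN0 : 0 <= N) by (unfold N; nra).
  assert (HN : 0 < N).
  { destruct (Rle_lt_dec N 0); auto. assert (N = 0) by lra.
    assert (d = 0) by nra. lra. }
  assert (Hp : 0 < sqrt P).
  { destruct (Rle_lt_dec (sqrt P) 0); auto. assert (sqrt P = 0) by lra.
    unfold N in HN. rewrite H1 in HN. lra. }
  assert (Hq : 0 < sqrt Q).
  { destruct (Rle_lt_dec (sqrt Q) 0); auto. assert (sqrt Q = 0) by lra.
    unfold N in HN. rewrite H1 in HN. lra. }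
  split; auto. split; auto.
  unfold dlt. fold P Q c d. fold N.
  set (x := c / (N + d)).
  assert (Hx : x * (N + d) = c) by (unfold x; field; lra).
  set (s := sqrt (1 + x²)).
  assert (Hs2 : s * s = 1 + x²) by (unfold s; apply sqrt_sqrt; unfold Rsqr; nra).
  assert (Hs : 0 < s) by (unfold s; apply sqrt_lt_R0; unfold Rsqr; nra).
  rewrite cos_2a, sin_2a, cos_atan, sin_atan. fold s. unfold Rsqr in Hs2.
  assert (Hd2 : (N + d) * (N + d) * (1 + x * x) = 2 * N * (N + d)).
  { replace ((N + d) * (N + d) * (1 + x * x)) with ((N+d)*(N+d) + (x * (N+d)) * (x * (N+d))) by ring.
    rewrite Hx. nra. }
  split.
  - replace (1 / s * (1 / s) - x / s * (x / s)) with ((1 - x * x) / (s * s)) by (field; lra).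
    rewrite Hs2. apply (Rmult_eq_reg_r ((N+d)*(N+d)*(1 + x*x))).
    2: { apply Rgt_not_eq. assert (0 < 1 + x*x) by nra. apply Rmult_lt_0_compat; nra. }
    replace ((1 - x * x) / (1 + x * x) * N * ((N + d) * (N + d) * (1 + x * x)))
      with (((N+d)*(N+d) - (x*(N+d))*(x*(N+d))) * N) by (field; nra).
    rewrite Hd2, Hx. nra.
  - replace (2 * (x / s) * (1 / s)) with (2 * x / (s * s)) by (field; lra).
    rewrite Hs2. apply (Rmult_eq_reg_r ((N+d)*(N+d)*(1 + x*x))).
    2: { apply Rgt_not_eq. assert (0 < 1 + x*x) by nra. apply Rmult_lt_0_compat; nra. }
    replace (2 * x / (1 + x * x) * N * ((N + d) * (N + d) * (1 + x * x)))
      with (2 * (x * (N+d)) * (N+d) * N) by (field; nra).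
    rewrite Hd2, Hx. ring.
Qed.

Lemma rot_lift p1 p2 q1 q2 ph : good p1 p2 q1 q2 ->
  p1 = sqrt (p1 ^ 2 + p2 ^ 2) * cos ph -> p2 = sqrt (p1 ^ 2 + p2 ^ 2) * sin ph ->
  q1 = sqrt (q1 ^ 2 + q2 ^ 2) * cos (ph + dlt p1 p2 q1 q2) /\
  q2 = sqrt (q1 ^ 2 + q2 ^ 2) * sin (ph + dlt p1 p2 q1 q2).
Proof.
  intros Hg H1 H2. destruct (cos_sin_dlt _ _ _ _ Hg) as [Hp [Hq [Hc Hs]]].
  set (sp := sqrt (p1 ^ 2 + p2 ^ 2)) in *. set (sq := sqrt (q1 ^ 2 + q2 ^ 2)) in *.
  set (D := dlt p1 p2 q1 q2) in *.
  assert (sP : sp * sp = p1^2 + p2^2) by (apply sqrt_sqrt; nra).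
  assert (Hne : sp * (sp * sq) <> 0) by (apply Rgt_not_eq; apply Rmult_lt_0_compat; nra).
  rewrite cos_plus, sin_plus. split.
  - apply (Rmult_eq_reg_l (sp * (sp * sq))); auto.
    replace (sp * (sp * sq) * (sq * (cos ph * cos D - sin ph * sin D)))
      with (sq * ((sp * cos ph) * (cos D * (sp * sq)) - (sp * sin ph) * (sin D * (sp * sq)))) by ring.
    rewrite <- H1, <- H2, Hc, Hs.
    replace (sp * (sp * sq) * q1) with ((sp * sp) * sq * q1) by ring. rewrite sP. ring.
  - apply (Rmult_eq_reg_l (sp * (sp * sq))); auto.
    replace (sp * (sp * sq) * (sq * (sin ph * cos D + cos ph * sin D)))
      with (sq * ((sp * sin ph) * (cos D * (sp * sq)) + (sp * cos ph) * (sin D * (sp * sq)))) by ring.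
    rewrite <- H1, <- H2, Hc, Hs.
    replace (sp * (sp * sq) * q2) with ((sp * sp) * sq * q2) by ring. rewrite sP. ring.
Qed.

Lemma good_sym p1 p2 q1 q2 : good p1 p2 q1 q2 -> good q1 q2 p1 p2.
Proof. unfold good. intros H. nra. Qed.

Lemma dlt_cont (p1 p2 q1 q2 : R -> R) t :
  continuity_pt p1 t -> continuity_pt p2 t -> continuity_pt q1 t -> continuity_pt q2 t ->
  good (p1 t) (p2 t) (q1 t) (q2 t) ->
  continuity_pt (fun t => dlt (p1 t) (p2 t) (q1 t) (q2 t)) t.
Proof.
  intros C1 C2 C3 C4 Hg. unfold dlt.
  apply continuity_pt_filterlim.
  apply (continuous_scal_r 2 (fun t => atan _)).
  apply continuous_atan_comp.
  apply continuity_pt_filterlim.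
  apply continuity_pt_div.
  - apply continuity_pt_minus; apply continuity_pt_mult; auto.
  - apply continuity_pt_plus.
    + apply continuity_pt_mult.
      * apply (continuity_pt_comp (fun t => p1 t ^ 2 + p2 t ^ 2) sqrt).
        apply continuity_pt_plus; apply (continuity_pt_comp _ (fun x => x ^ 2)); auto;
          apply derivable_continuous_pt; apply derivable_pt_pow.
        apply continuity_pt_sqrt. nra.
      * apply (continuity_pt_comp (fun t => q1 t ^ 2 + q2 t ^ 2) sqrt).
        apply continuity_pt_plus; apply (continuity_pt_comp _ (fun x => x ^ 2)); auto;
          apply derivable_continuous_pt; apply derivable_pt_pow.
        apply continuity_pt_sqrt. nra.
    + apply continuity_pt_plus; apply continuity_pt_mult; auto.
  - unfold good in Hg. lra.
Qed.

Lemma lift_transfer (p1 p2 q1 q2 phi : R -> R) :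
  (forall t, continuity_pt p1 t) -> (forall t, continuity_pt p2 t) ->
  (forall t, continuity_pt q1 t) -> (forall t, continuity_pt q2 t) ->
  (forall t, good (p1 t) (p2 t) (q1 t) (q2 t)) ->
  arg_lift p1 p2 phi ->
  arg_lift q1 q2 (fun t => phi t + dlt (p1 t) (p2 t) (q1 t) (q2 t)).
Proof.
  intros C1 C2 C3 C4 G [Hc Hl]. split.
  - intros t. apply (continuous_plus phi (fun t => dlt (p1 t) (p2 t) (q1 t) (q2 t))).
    apply Hc. apply continuity_pt_filterlim. apply dlt_cont; auto.
  - intros t. destruct (Hl t). apply rot_lift; auto.
Qed.

Lemma good_from_det c s X Y V W : c ^ 2 + s ^ 2 = 1 -> X * W - Y * V > 0 ->
  good (- s * X + c * Y) (c * X + s * Y) (- s * X + c * Y) (- s * V + c * W).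
Proof.
  intros Hcs Hdet. unfold good.
  set (a := - s * X + c * Y). set (b1 := c * X + s * Y). set (b2 := - s * V + c * W).
  assert (Hid : b1 * b2 - a * (c * V + s * W) = (c^2 + s^2) * (X * W - Y * V))
    by (unfold a, b1, b2; ring).
  rewrite Hcs, Rmult_1_l in Hid.
  assert (H1 : 0 <= a^2+b1^2) by nra. assert (H2 : 0 <= a^2+b2^2) by nra.
  pose proof (sqrt_pos (a^2+b1^2)). pose proof (sqrt_pos (a^2+b2^2)).
  pose proof (sqrt_sqrt _ H1). pose proof (sqrt_sqrt _ H2).
  set (N := sqrt (a ^ 2 + b1 ^ 2) * sqrt (a ^ 2 + b2 ^ 2)).
  assert (HN0 : 0 <= N) by (unfold N; nra).
  assert (HN2 : N * N = (a^2+b1^2)*(a^2+b2^2)).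
  { unfold N. replace (sqrt (a ^ 2 + b1 ^ 2) * sqrt (a ^ 2 + b2 ^ 2) * (sqrt (a ^ 2 + b1 ^ 2) * sqrt (a ^ 2 + b2 ^ 2)))
      with ((sqrt (a ^ 2 + b1 ^ 2) * sqrt (a ^ 2 + b1 ^ 2)) * (sqrt (a ^ 2 + b2 ^ 2) * sqrt (a ^ 2 + b2 ^ 2))) by ring.
    rewrite H3, H4. ring. }
  set (d := a * a + b1 * b2).
  replace (a * a + b1 * b2) with d by reflexivity.
  destruct (Rlt_le_dec 0 d) as [Hd|Hd]. lra.
  assert (Ha : a <> 0).
  { intros Ha0. rewrite Ha0 in Hid. unfold d in Hd. rewrite Ha0 in Hd. lra. }
  assert (Hb : b1 <> b2).
  { intros Hb0. unfold d in Hd. rewrite Hb0 in Hd. assert (0 < Rsqr a) by (apply Rsqr_pos_lt; auto). unfold Rsqr in *. nra. }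
  assert (Hab : 0 < a * a * ((b2 - b1) * (b2 - b1))).
  { apply Rmult_lt_0_compat; apply Rsqr_pos_lt; auto. lra. }
  assert (HNd : N * N = d * d + a * a * ((b2 - b1) * (b2 - b1))) by (rewrite HN2; unfold d; ring).
  nra.
Qed.

From Stdlib Require Import FunctionalExtensionality PropExtensionality.

Lemma bd_eq g h : continuous_on_cB g -> continuous_on_cB h ->
  (forall x y, in_B x y -> g x y = h x y) -> forall x y, on_dB x y -> g x y = h x y.
Proof.
  intros Hg Hh E x y Hxy.
  destruct (Req_dec (g x y) (h x y)) as [|Hne]; auto. exfalso.
  set (e := Rabs (g x y - h x y) / 2).
  assert (He : 0 < e) by (unfold e; apply Rdiv_lt_0_compat; [apply Rabs_pos_lt; lra | lra]).
  assert (Hc : in_cB x y) by (unfold in_cB, on_dB in *; lra).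
  destruct (Hg x y Hc e He) as [d1 [Hd1 H1]].
  destruct (Hh x y Hc e He) as [d2 [Hd2 H2]].
  destruct (rn_close (Rmin d1 d2) (Rmin_pos _ _ Hd1 Hd2)) as [N HN].
  pose proof (HN N (le_n N)) as Hr. pose proof (rn_bounds N) as Hb.
  pose proof (Rmin_l d1 d2). pose proof (Rmin_r d1 d2).
  unfold on_dB in Hxy.
  assert (Hx : Rabs (rn N * x - x) < Rmin d1 d2).
  { replace (rn N * x - x) with (- (1 - rn N) * x) by ring. rewrite Rabs_mult, Rabs_Ropp.
    apply Rle_lt_trans with (Rabs (1 - rn N) * 1); [|lra].
    apply Rmult_le_compat_l. apply Rabs_pos. apply Rabs_le; nra. }
  assert (Hy : Rabs (rn N * y - y) < Rmin d1 d2).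
  { replace (rn N * y - y) with (- (1 - rn N) * y) by ring. rewrite Rabs_mult, Rabs_Ropp.
    apply Rle_lt_trans with (Rabs (1 - rn N) * 1); [|lra].
    apply Rmult_le_compat_l. apply Rabs_pos. apply Rabs_le; nra. }
  assert (HB : in_B (rn N * x) (rn N * y)) by (unfold in_B; nra).
  assert (HcB : in_cB (rn N * x) (rn N * y)) by (unfold in_cB, in_B in *; lra).
  pose proof (H1 _ _ HcB ltac:(lra) ltac:(lra)). pose proof (H2 _ _ HcB ltac:(lra) ltac:(lra)).
  rewrite (E _ _ HB) in *.
  assert (Rabs (g x y - h x y) < 2 * e).
  { replace (g x y - h x y) with (- (h (rn N * x) (rn N * y) - g x y) + (h (rn N * x) (rn N * y) - h x y)) by ring.
    eapply Rle_lt_trans. apply Rabs_triang. rewrite Rabs_Ropp. lra. }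
  unfold e in H5. lra.
Qed.

Lemma opp_cont g : continuous_on_cB g -> continuous_on_cB (fun x y => - g x y).
Proof.
  intros H x y Hc e He. destruct (H x y Hc e He) as [d [Hd Hx]]. exists d; split; auto.
  intros. replace (- g x' y' - - g x y) with (- (g x' y' - g x y)) by ring.
  rewrite Rabs_Ropp. auto.
Qed.

Theorem lemma3p11
  (u v ux uy vx vy ut utx uty : R -> R -> R) :
  (* U = (u, v) ∈ C^1(closed B; R^2), harmonic in B *)
  C1_cB u ux uy -> C1_cB v vx vy ->
  harmonic_in_B u -> harmonic_in_B v ->
  (* ut is a harmonic conjugate of u in B (Cauchy-Riemann for f = u + i ut),
     taken with its continuous (C^1) extension to the closed disk *)
  C1_cB ut utx uty ->
  (forall x y, in_B x y -> utx x y = - uy x y /\ uty x y = ux x y) ->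
  (* det DU > 0 on ∂B *)
  (forall x y, on_dB x y -> ux x y * vy x y - uy x y * vx x y > 0) ->
  (* ∂u/∂θ restricted to ∂B vanishes at only finitely many points *)
  (exists l : list (R * R), forall x y, on_dB x y ->
      - y * ux x y + x * uy x y = 0 -> In (x, y) l) ->
  WN u ut = WN u v.
Proof.
  intros Cu Cv _ _ Ct CR Hdet _.
  set (A := fun t => - sin t * ux (cos t) (sin t) + cos t * uy (cos t) (sin t)).
  set (B1 := fun t => - sin t * utx (cos t) (sin t) + cos t * uty (cos t) (sin t)).
  set (B2 := fun t => - sin t * vx (cos t) (sin t) + cos t * vy (cos t) (sin t)).
  assert (EA : Derive (bdry u) = A).
  { apply functional_extensionality; intro t. apply is_derive_unique. apply bdry_deriv; auto. }
  assert (E1 : Derive (bdry ut) = B1).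
  { apply functional_extensionality; intro t. apply is_derive_unique. apply bdry_deriv; auto. }
  assert (E2 : Derive (bdry v) = B2).
  { apply functional_extensionality; intro t. apply is_derive_unique. apply bdry_deriv; auto. }
  destruct Cu as [_ [Cux [Cuy _]]]. destruct Cv as [_ [Cvx [Cvy _]]].
  destruct Ct as [_ [Ctx [Cty _]]].
  assert (Htx : forall x y, on_dB x y -> utx x y = - uy x y).
  { apply (bd_eq utx (fun x y => - uy x y)); auto. apply opp_cont; auto.
    intros; apply CR; auto. }
  assert (Hty : forall x y, on_dB x y -> uty x y = ux x y).
  { apply bd_eq; auto. intros; apply CR; auto. }
  assert (B1e : forall t, B1 t = cos t * ux (cos t) (sin t) + sin t * uy (cos t) (sin t)).
  { intros t. unfold B1. assert (Ho : on_dB (cos t) (sin t)) by (unfold on_dB; apply circ).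
    rewrite (Htx _ _ Ho), (Hty _ _ Ho). ring. }
  assert (G : forall t, good (A t) (B1 t) (A t) (B2 t)).
  { intros t. rewrite B1e. unfold A, B2. apply good_from_det. apply circ.
    apply Hdet. unfold on_dB; apply circ. }
  assert (CA : forall t, continuity_pt A t).
  { intros t. unfold A. apply continuity_pt_plus; apply continuity_pt_mult.
    apply continuity_pt_opp, continuity_sin. apply (cB_comp ux); auto.
    apply continuity_cos. apply (cB_comp uy); auto. }
  assert (C1 : forall t, continuity_pt B1 t).
  { intros t. unfold B1. apply continuity_pt_plus; apply continuity_pt_mult.
    apply continuity_pt_opp, continuity_sin. apply (cB_comp utx); auto.
    apply continuity_cos. apply (cB_comp uty); auto. }
  assert (C2 : forall t, continuity_pt B2 t).
  { intros t. unfold B2. apply continuity_pt_plus; apply continuity_pt_mult.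
    apply continuity_pt_opp, continuity_sin. apply (cB_comp vx); auto.
    apply continuity_cos. apply (cB_comp vy); auto. }
  assert (PA : A (2 * PI) = A 0) by (unfold A; rewrite cos_2PI, sin_2PI, cos_0, sin_0; reflexivity).
  assert (P1 : B1 (2 * PI) = B1 0) by (unfold B1; rewrite cos_2PI, sin_2PI, cos_0, sin_0; reflexivity).
  assert (P2 : B2 (2 * PI) = B2 0) by (unfold B2; rewrite cos_2PI, sin_2PI, cos_0, sin_0; reflexivity).
  unfold WN. rewrite EA, E1, E2. f_equal.
  apply functional_extensionality; intro w. apply propositional_extensionality. split.
  - intros [phi [Hl Hw]].
    exists (fun t => phi t + dlt (A t) (B1 t) (A t) (B2 t)). split.
    + apply lift_transfer; auto.
    + rewrite Hw, PA, P1, P2. field. apply Rgt_not_eq. pose proof PI_RGT_0. lra.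
  - intros [phi [Hl Hw]].
    exists (fun t => phi t + dlt (A t) (B2 t) (A t) (B1 t)). split.
    + apply lift_transfer; auto. intros t; apply good_sym, G.
    + rewrite Hw, PA, P1, P2. field. apply Rgt_not_eq. pose proof PI_RGT_0. lra.
Qed.
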